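(* Let $H$ be a real Hilbert space, $A:H\to c_0$ bounded linear with adjoint $A^*:\ell^1\to H$ (identifying $c_0^*=\ell^1$), let $H_n\subset H$ be a subspace of dimension $n$ with $\mathcal N(A)\cap H_n=\{0\}$, let $P_n$ be the orthogonal projection onto $H_n$, and let $f^\delta\in H$. Then $u^n\in\ell^1$ is a solution of $$\min_{u\in\ell^1}\|u\|_1\quad\text{subject to}\quad \langle z,A^*u\rangle=\langle z,f^\delta\rangle\ \ \forall z\in H_n$$ if and only if $u^n\in E_n$ and $\langle z,A^*u^n\rangle=\langle z,f^\delta\rangle$ for all $z\in H_n$, where $$E_n=(\partial\|\cdot\|_1)^{-1}(AH_n)=\{u\in\ell^1:\ \partial\|\cdot\|_1(u)\cap AH_n\neq\emptyset\}.$$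
   Context: For $u\in\ell^1$, $\partial\|\cdot\|_1(u)=\{\xi\in\ell^\infty:\ \|\xi\|_\infty\le1,\ \sum_i\xi_iu_i=\|u\|_1\}$, i.e. $\xi_i=u_i/|u_i|$ if $u_i\ne0$ and $\xi_i\in[-1,1]$ if $u_i=0$. $AH_n=\{Az: z\in H_n\}\subset c_0\subset\ell^\infty$. $A^*$ is defined by $\langle A^*u,z\rangle=\sum_iu_i(Az)_i$. *)

(* Defs.v *)
From HB Require Import structures.
From mathcomp Require Import all_boot all_order all_algebra.
From mathcomp Require Import all_classical all_reals all_analysis.
Set Implicit Arguments. Unset Strict Implicit. Unset Printing Implicit Defensive.
Import Order.TTheory GRing.Theory Num.Theory.
Import numFieldNormedType.Exports.
Local Open Scope classical_set_scope.
Local Open Scope ring_scope.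

Section Defs.
Variable R : realType.

Definition in_l1 (u : R^nat) : Prop := cvgn (series (fun i => `|u i|)).

Definition norm1 (u : R^nat) : R := limn (series (fun i => `|u i|)).

Definition in_linf (xi : R^nat) : Prop := exists M : R, forall i, `|xi i| <= M.

Definition in_c0 (xi : R^nat) : Prop := xi @ \oo --> (0 : R).

Definition pairing (xi u : R^nat) : R := limn (series (fun i => xi i * u i)).

Definition subdiff_norm1 (u : R^nat) : set (R^nat) :=
  [set xi | in_linf xi /\ (forall i, `|xi i| <= 1) /\ pairing xi u = norm1 u].

Definition is_inner_product (H : normedModType R) (ip : H -> H -> R) : Prop :=
  (forall (a : R) (x y z : H), ip (a *: x + y) z = a * ip x z + ip y z) /\
  (forall x y : H, ip x y = ip y x) /\
  (forall x : H, `|x| = Num.sqrt (ip x x)).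

Definition bounded_linear_c0 (H : normedModType R) (A : H -> R^nat) : Prop :=
  (forall (a : R) (x y : H) i, A (a *: x + y) i = a * A x i + A y i) /\
  (forall x, in_c0 (A x)) /\
  (exists C : R, forall x i, `|A x i| <= C * `|x|).

Definition is_adjoint (H : normedModType R) (ip : H -> H -> R)
  (A : H -> R^nat) (Astar : R^nat -> H) : Prop :=
  forall u, in_l1 u -> forall z, ip (Astar u) z = pairing (A z) u.

Definition lin_indep (H : lmodType R) (n : nat) (e : 'I_n -> H) : Prop :=
  forall c : 'I_n -> R, \sum_(i < n) c i *: e i = 0 -> forall i, c i = 0.

(* the span of the family e (the n-dimensional subspace H_n when e is free) *)
Definition span_of (H : lmodType R) (n : nat) (e : 'I_n -> H) : set H :=
  [set z | exists c : 'I_n -> R, z = \sum_(i < n) c i *: e i].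

Definition constraint (H : normedModType R) (ip : H -> H -> R)
  (Astar : R^nat -> H) (Hn : set H) (f : H) (u : R^nat) : Prop :=
  forall z, Hn z -> ip z (Astar u) = ip z f.

Definition is_min_solution (H : normedModType R) (ip : H -> H -> R)
  (Astar : R^nat -> H) (Hn : set H) (f : H) (u : R^nat) : Prop :=
  in_l1 u /\ constraint ip Astar Hn f u /\
  forall v, in_l1 v -> constraint ip Astar Hn f v -> norm1 u <= norm1 v.

Definition En (H : normedModType R) (A : H -> R^nat) (Hn : set H) : set (R^nat) :=
  [set u | in_l1 u /\ exists xi, subdiff_norm1 u xi /\ (A @` Hn) xi].

End Defs.

(* Main.v *)
Require Import Defs.
From HB Require Import structures.
From mathcomp Require Import all_boot all_order all_algebra.
From mathcomp Require Import all_classical all_reals all_analysis.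
From mathcomp Require Import ring lra.
Import Order.TTheory GRing.Theory Num.Theory.
Import numFieldNormedType.Exports.
Local Open Scope classical_set_scope.
Local Open Scope ring_scope.

Section L.
Context {R : realType}.
Implicit Types u v a : R^nat.

Lemma abs_cvg a v (M : R) : in_l1 v -> (forall i, `|a i| <= M) ->
  cvgn (series (fun i => a i * v i)).
Proof.
move=> hv hM; apply: normed_cvg.
have M0 : 0 <= M by apply: le_trans (hM 0%N).
apply: (@series_le_cvg _ _ (fun i => M * `|v i|)) => /=.
- by [].
- by move=> i; rewrite mulr_ge0.
- by move=> i; rewrite normrM ler_wpM2r.
- by have := @is_cvg_seriesZ _ _ M hv.
Qed.

Lemma pairing_le {a v} : in_l1 v -> (forall i, `|a i| <= 1) -> pairing a v <= norm1 v.
Proof.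
move=> hv ha; apply: lim_series_le; [exact: (@abs_cvg a v 1 hv ha) | exact: hv |].
move=> i; apply: (le_trans (ler_norm (a i * v i))); rewrite normrM.
by rewrite -[leRHS]mul1r ler_wpM2r.
Qed.

Lemma in_l1D {u v} : in_l1 u -> in_l1 v -> in_l1 (fun i => u i + v i).
Proof.
move=> hu hv; apply: (@series_le_cvg _ (fun i => `|u i + v i|) (fun i => `|u i| + `|v i|)).
- by [].
- by move=> i; rewrite addr_ge0.
- by move=> i; apply: ler_normD.
- exact: (is_cvg_seriesD hu hv).
Qed.

Lemma in_l1Z s {v} : in_l1 v -> in_l1 (fun i => s * v i).
Proof.
move=> hv; rewrite /in_l1; under eq_fun do rewrite normrM.
by have := @is_cvg_seriesZ _ _ `|s| hv.
Qed.

Lemma norm1D {u v} : in_l1 u -> in_l1 v -> norm1 (fun i => u i + v i) <= norm1 u + norm1 v.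
Proof.
move=> hu hv; rewrite /norm1 -lim_seriesD //.
apply: lim_series_le => //; [exact: in_l1D | exact: (is_cvg_seriesD hu hv)|].
by move=> i; apply: ler_normD.
Qed.

Lemma norm1Z s v : in_l1 v -> norm1 (fun i => s * v i) = `|s| * norm1 v.
Proof.
move=> hv; rewrite /norm1; under eq_fun do rewrite normrM.
by have := @lim_seriesZ _ _ `|s| hv.
Qed.

Lemma norm1_ge0 {v} : in_l1 v -> 0 <= norm1 v.
Proof.
move=> hv; apply: limr_ge => //; near=> k; rewrite /series /=; exact: sumr_ge0.
Unshelve. all: by end_near. Qed.

Lemma pairingD a u v : in_l1 u -> in_l1 v -> (exists M, forall i, `|a i| <= M) ->
  pairing a (fun i => u i + v i) = pairing a u + pairing a v.
Proof.
move=> hu hv [M hM]; rewrite /pairing -lim_seriesD; try exact: abs_cvg hM.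
by congr (lim (series _ @ \oo)); apply/funext => i /=; rewrite mulrDr.
Qed.

Lemma pairingZ a s v : in_l1 v -> (exists M, forall i, `|a i| <= M) ->
  pairing a (fun i => s * v i) = s * pairing a v.
Proof.
move=> hv [M hM]; rewrite /pairing -[RHS]/(s *: _) -lim_seriesZ; last exact: abs_cvg hM.
by congr (lim (series _ @ \oo)); apply/funext => i /=; rewrite mulrCA.
Qed.

Definition delta (j : nat) : R^nat := fun k => (k == j)%:R.

Lemma series_delta a j : \forall n \near \oo, series (fun k => a k * delta j k) n = a j.
Proof.
near=> n; rewrite /series /= /delta.
have jn : (j < n)%N by near: n; exists j.+1 => // m /=.
rewrite (bigD1_seq j) ?mem_index_iota ?iota_uniq //= eqxx mulr1 big1 ?addr0 //.
by move=> k /negbTE ->; rewrite mulr0.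
Unshelve. all: by end_near. Qed.

Lemma pairing_delta a j : pairing a (delta j) = a j.
Proof. rewrite /pairing; apply: lim_near_cst => //; exact: series_delta. Qed.

Lemma abs_delta j : (fun i => `|delta j i|) = (fun i => (fun=> 1) i * delta j i).
Proof. by apply/funext => i; rewrite mul1r /delta ger0_norm. Qed.

Lemma delta_l1 j : in_l1 (delta j).
Proof.
rewrite /in_l1 abs_delta; apply/cvg_ex; exists 1; apply: cvg_near_cst.
exact: series_delta.
Qed.

Lemma norm1_delta j : norm1 (delta j) = 1.
Proof.
rewrite /norm1 abs_delta; apply: lim_near_cst => //; exact: series_delta.
Qed.

Lemma zero_l1 : in_l1 (fun=> 0 : R).
Proof.
rewrite /in_l1.
have -> : (fun i => `|(fun=> 0 : R) i|) = (fun i => (fun=> 0 : R) i * delta 0 i).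
  by apply/funext => i; rewrite normr0 mul0r.
apply/cvg_ex; exists 0; apply: cvg_near_cst; exact: series_delta.
Qed.

Lemma norm1_0 : norm1 (fun=> 0 : R) = 0.
Proof.
rewrite /norm1.
have -> : (fun i => `|(fun=> 0 : R) i|) = (fun i => (fun=> 0 : R) i * delta 0 i).
  by apply/funext => i; rewrite normr0 mul0r.
by apply: lim_near_cst => //; exact: series_delta.
Qed.

Lemma pairing0 a : pairing a (fun=> 0) = 0.
Proof.
rewrite /pairing.
have -> : (fun i => a i * (fun=> 0 : R) i) = (fun i => (fun=> 0 : R) i * delta 0 i).
  by apply/funext => i; rewrite !mulr0 mul0r.
by apply: lim_near_cst => //; exact: series_delta.
Qed.

End L.

Section HBsec.
Context {R : realType}.

Lemma finHB (n : nat) (K : ('I_n -> R) -> R -> Prop) :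
 (forall y1 x1 y2 x2, K y1 x1 -> K y2 x2 -> K (fun k => y1 k + y2 k) (x1 + x2)) ->
 (forall y x t, 0 < t -> K y x -> K (fun k => t * y k) (t * x)) ->
 (forall y x, K y x -> exists x', K (fun k => - y k) x') ->
 (forall y x, K y x -> (forall k, y k = 0) -> 0 <= x) ->
 exists c : 'I_n -> R, forall y x, K y x -> \sum_(k < n) c k * y k <= x.
Proof.
move=> KD KZ KN K0.
suff H : forall j, (j <= n)%N -> exists c : 'I_n -> R, forall y x, K y x ->
    (forall k : 'I_n, (j <= k)%N -> y k = 0) -> \sum_(k < n) c k * y k <= x.
  have [c hc] := H n (leqnn n); exists c => y x Kyx; apply: hc Kyx _ => k.
  by rewrite leqNgt ltn_ord.
elim=> [_|j IH jn].
  exists (fun=> 0) => y x Kyx y0; rewrite big1; last by move=> k _; rewrite mul0r.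
  exact: (K0 _ _ Kyx (fun k => y0 k (leq0n k))).
have [c hc] := IH (ltnW jn).
pose jo : 'I_n := Ordinal jn.
pose d := fun y : 'I_n -> R => \sum_(k < n) c k * y k - c jo * y jo.
have dE : forall y, y jo = 0 -> d y = \sum_(k < n) c k * y k.
  by move=> y y0; rewrite /d y0 mulr0 subr0.
have dD : forall y1 y2, d (fun k => y1 k + y2 k) = d y1 + d y2.
  move=> y1 y2; rewrite /d; under eq_bigr do rewrite mulrDr.
  rewrite big_split /=; ring.
have dZ : forall t y, d (fun k => t * y k) = t * d y.
  move=> t y; rewrite /d; under eq_bigr do rewrite mulrCA.
  rewrite -mulr_sumr /=; ring.
pose I := [set z | exists y x, [/\ K y x, forall k : 'I_n, (j < k)%N -> y k = 0,
                                  y jo = 1 & z = x - d y]].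
pose alpha := inf I.
exists (fun k => if k == jo then alpha else c k).
have cE : forall y, \sum_(k < n) (if k == jo then alpha else c k) * y k = d y + alpha * y jo.
  move=> y; rewrite /d (bigD1 jo) //= eqxx [in RHS](bigD1 jo) //=.
  rewrite (eq_bigr (fun k => c k * y k)); last by move=> k /negbTE ->.
  ring.
have lb : forall y x, K y x -> (forall k : 'I_n, (j < k)%N -> y k = 0) -> y jo = -1 ->
    lbound I (d y - x).
  move=> y x Kyx yz y1 z [y' [x' [Ky' y'z y'1 ->]]].
  have hz : forall k : 'I_n, (j <= k)%N -> y k + y' k = 0.
    move=> k; rewrite leq_eqVlt; case/orP => [/eqP jk|jk].
      have -> : k = jo by apply: val_inj; rewrite /= -jk.
      by rewrite y1 y'1 addNr.
    by rewrite yz // y'z // addr0.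
  have h := hc _ _ (KD _ _ _ _ Kyx Ky') hz.
  rewrite -dE ?dD in h; last by rewrite y1 y'1 addNr.
  lra.
move=> y x Kyx yz; rewrite cE.
have [t0|tneq] := eqVneq (y jo) 0.
  rewrite t0 mulr0 addr0 dE //; apply: (hc _ _ Kyx) => k; rewrite leq_eqVlt.
  case/orP => [/eqP jk| /yz //].
  have -> : k = jo by apply: val_inj; rewrite /= -jk.
  exact: t0.
move: tneq; rewrite neq_lt => /orP [tneg|tpos].
- pose s := - y jo; have spos : 0 < s by rewrite oppr_gt0.
  have si : 0 < s^-1 by rewrite invr_gt0.
  have Ky' := KZ _ _ _ si Kyx.
  have h1 : (s^-1 * y jo) = -1.
    by rewrite /s invrN mulNr mulVf // ltr0_neq0.
  have yz' : forall k : 'I_n, (j < k)%N -> s^-1 * y k = 0.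
    by move=> k jk /=; rewrite (yz k jk) mulr0.
  have L := lb _ _ Ky' yz' h1.
  have [x'' Kn] := KN _ _ Ky'.
  have inI : I (x'' - d (fun k => - (s^-1 * y k))).
    exists (fun k => - (s^-1 * y k)), x''; split.
    - exact: Kn.
    - by move=> k jk /=; rewrite yz' // oppr0.
    - by rewrite h1 opprK.
    - by [].
  have h2 := lb_le_inf (ex_intro _ _ inI) L.
  rewrite dZ -/alpha in h2.
  have : s * (s^-1 * d y - s^-1 * x) <= s * alpha by rewrite ler_pM2l.
  rewrite mulrBr !mulrA mulfV ?lt0r_neq0 // !mul1r /s; lra.
- have ti : 0 < (y jo)^-1 by rewrite invr_gt0.
  have Ky' := KZ _ _ _ ti Kyx.
  have h1 : ((y jo)^-1 * y jo) = 1 by rewrite mulVf // lt0r_neq0.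
  have inI : I ((y jo)^-1 * x - d (fun k => (y jo)^-1 * y k)).
    exists (fun k => (y jo)^-1 * y k), ((y jo)^-1 * x); split.
    - exact: Ky'.
    - by move=> k jk /=; rewrite (yz k jk) mulr0.
    - exact: h1.
    - by [].
  have [x'' Kn] := KN _ _ Ky'.
  have hl : has_lbound I.
    exists (d (fun k => - ((y jo)^-1 * y k)) - x''); apply: lb Kn _ _.
      by move=> k jk /=; rewrite (yz k jk) mulr0 oppr0.
    by rewrite h1.
  have := ge_inf hl inI; rewrite dZ -/alpha => h2.
  have : y jo * alpha <= y jo * ((y jo)^-1 * x - (y jo)^-1 * d y) by rewrite ler_pM2l.
  rewrite mulrBr !mulrA mulfV ?lt0r_neq0 // !mul1r; lra.
Qed.

End HBsec.

Lemma ip_sum (R : realType) (H : normedModType R) (ip : H -> H -> R) n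
  (c : 'I_n -> R) (e : 'I_n -> H) w :
 (forall (a : R) (x y z : H), ip (a *: x + y) z = a * ip x z + ip y z) ->
 ip (\sum_(k < n) c k *: e k) w = \sum_(k < n) c k * ip (e k) w.
Proof.
move=> L.
have ip0 : ip 0 w = 0.
  have := L 1 0 0 w; rewrite scaler0 addr0 mul1r => h; lra.
apply: (big_rec2 (fun z r => ip z w = r)) => // i y1 y2 _ <-; exact: L.
Qed.

Theorem proposition2 (R : realType) (H : completeNormedModType R)
  (ip : H -> H -> R) (A : H -> R^nat) (Astar : R^nat -> H)
  (n : nat) (e : 'I_n -> H) (f : H) (un : R^nat) :
  is_inner_product ip ->
  bounded_linear_c0 A ->
  is_adjoint ip A Astar ->
  lin_indep e ->
  (forall z, span_of e z -> A z = 0 -> z = 0) ->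
  (is_min_solution ip Astar (span_of e) f un <->
   (En A (span_of e) un /\ constraint ip Astar (span_of e) f un)).
Proof.
move=> [ipL [ipS ipN]] [AL [Ac0 [C AC]]] adj _ _.
have Abd : forall z, exists M, forall i, `|A z i| <= M.
  by move=> z; exists (C * `|z|).
split; last first.
  move=> [[hl1 [xi [[_ [hxi hpair]] [z0 hz0 Exi]]]] hcon].
  split => //; split => // v hv hcv.
  rewrite -hpair -Exi -adj // ipS hcon // -(hcv _ hz0) ipS adj //.
  by apply: pairing_le => //; rewrite Exi.
move=> [hl1 [hcon hmin]].
pose T := fun v (k : 'I_n) => ip (e k) (Astar v).
have TE : forall v, in_l1 v -> forall k, T v k = pairing (A (e k)) v.
  by move=> v hv k; rewrite /T ipS adj.
have TD : forall v1 v2, in_l1 v1 -> in_l1 v2 ->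
    forall k, T (fun i => v1 i + v2 i) k = T v1 k + T v2 k.
  move=> v1 v2 h1 h2 k; rewrite TE; last exact: in_l1D.
  by rewrite !TE //; apply: pairingD.
have TZ : forall s v, in_l1 v -> forall k, T (fun i => s * v i) k = s * T v k.
  move=> s v h k; rewrite TE; last exact: in_l1Z.
  by rewrite TE //; apply: pairingZ.
have T0 : forall k, T (fun=> 0) k = 0.
  by move=> k; rewrite TE ?pairing0 //; exact: zero_l1.
pose b := T un. pose r := norm1 un.
have r0 : 0 <= r := norm1_ge0 hl1.
pose K := fun (y : 'I_n -> R) (x : R) => exists v t,
  [/\ in_l1 v, y = (fun k => T v k - t * b k) & norm1 v - t * r <= x].
have [c hc] : exists c : 'I_n -> R, forall y x, K y x -> \sum_(k < n) c k * y k <= x.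
  apply: finHB.
  - move=> y1 x1 y2 x2 [v1 [t1 [h1 -> hx1]]] [v2 [t2 [h2 -> hx2]]].
    exists (fun i => v1 i + v2 i), (t1 + t2); split.
    + exact: in_l1D.
    + by apply/funext => k; rewrite TD //; ring.
    + have := norm1D h1 h2; lra.
  - move=> y x t tp [v [s [h -> hx]]].
    exists (fun i => t * v i), (t * s); split.
    + exact: in_l1Z.
    + by apply/funext => k; rewrite TZ //; ring.
    + by rewrite norm1Z // gtr0_norm // -mulrA -mulrBr ler_pM2l.
  - move=> y x [v [t [h -> hx]]].
    exists (x + 2 * t * r), (fun i => -1 * v i), (-t); split.
    + exact: in_l1Z.
    + by apply/funext => k; rewrite TZ //; ring.
    + rewrite norm1Z // normrN normr1 mul1r; lra.
  - move=> y x [v [t [h ey hx]]] y0.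
    have hT : forall k, T v k = t * b k.
      by move=> k; have := y0 k; rewrite ey /= => /eqP; rewrite subr_eq0 => /eqP.
    case: (ltP 0 t) => tp.
    + pose v' := fun i => t^-1 * v i.
      have hv' : in_l1 v' := in_l1Z _ h.
      have cv' : constraint ip Astar (span_of e) f v'.
        move=> z [cz ->]; rewrite ip_sum // -(hcon _ (ex_intro _ cz erefl)) ip_sum //.
        apply: eq_bigr => k _; congr (_ * _).
        rewrite -/(T v' k) TZ // hT mulrA mulVf ?gt_eqF // mul1r //.
      have := hmin _ hv' cv'; rewrite /v' norm1Z // gtr0_norm ?invr_gt0 // => hle.
      have : t * r <= t * (t^-1 * norm1 v) by rewrite ler_pM2l.
      rewrite mulrA mulfV ?gt_eqF // mul1r; lra.
    + have := norm1_ge0 h.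
      have : t * r <= 0 by apply: mulr_le0_ge0.
      lra.
have Sdef : forall v t, in_l1 v ->
    \sum_(k < n) c k * (T v k - t * b k) <= norm1 v - t * r.
  by move=> v t hv; apply: hc; exists v, t; split.
have sumB : forall v t, \sum_(k < n) c k * (T v k - t * b k) =
    \sum_(k < n) c k * T v k - t * \sum_(k < n) c k * b k.
  by move=> v t; rewrite mulr_sumr -sumrB; apply: eq_bigr => k _; ring.
have S0 : \sum_(k < n) c k * T (fun=> 0) k = 0.
  by rewrite big1 // => k _; rewrite T0 mulr0.
have cb : \sum_(k < n) c k * b k = r.
  have h1 := Sdef _ 1 zero_l1; have h2 := Sdef _ (-1) zero_l1.
  rewrite sumB norm1_0 S0 in h1; rewrite sumB norm1_0 S0 in h2; lra.
pose z0 := \sum_(k < n) c k *: e k.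
have Sz : forall v, in_l1 v -> \sum_(k < n) c k * T v k = pairing (A z0) v.
  by move=> v hv; rewrite -ip_sum // ipS adj.
split => //; split => //.
exists (A z0); split; last by exists z0 => //; exists c.
split; [exact: Abd | split].
- move=> i; rewrite ler_norml; apply/andP; split.
  + have hd := in_l1Z (-1 : R) (@delta_l1 R i).
    have := Sdef _ 0 hd; rewrite sumB mul0r !subr0 Sz //.
    rewrite pairingZ ?pairing_delta ?norm1Z ?norm1_delta ?normrN1 //;
      try exact: (@delta_l1 R i).
    lra.
  + have hd := @delta_l1 R i.
    have := Sdef _ 0 hd; rewrite sumB Sz // pairing_delta norm1_delta.
    lra.
- by rewrite -Sz // cb.
Qed.
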